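(* Let $I=(N,O,\succsim)$ be a general instance, $p$ a generalized random matching and $p'$ its associated random matching for the associated instance $I'$. Then $p$ is fractionally weakly stable if and only if $p'$ is fractionally weakly stable and $p$ is non-wasteful (i.e., $p'$ respects non-wastefulness).
   Context: General instance: $N=\{1,\dots,n\}$ agents, $O=\{o_1,\dots,o_m\}$ objects ($m,n\ge1$ arbitrary), $\emptyset$ the null object; each agent $i$ has a weak order $\succsim_i$ over $O\cup\{\emptyset\}$, each object $o$ a weak order $\succsim_o$ over $N\cup\{\emptyset\}$, with either $o\succ_i\emptyset$ or $\emptyset\succ_i o$, and either $i\succ_o\emptyset$ or $\emptyset\succ_o i$. $(i,o)$ is acceptable if $o\succ_i\emptyset$ and $i\succ_o\emptyset$. A generalized random matching is an $n\times m$ nonnegative matrix with row and column sums $\le1$; write $p(\emptyset,o)=1-\sum_{i\in N}p(i,o)$. $p$ is individually rational if $p(i,o)=0$ whenever $\emptyset\succ_i o$ or $\emptyset\succ_o i$; non-wasteful if there is no acceptable $(i,o)$ with $\sum_{o':o'\succsim_i o}p(i,o')<1$ and $\sum_j p(j,o)<1$. $p$ is fractionally weakly stable if it is individually rational, non-wasteful, and for every acceptable pair $(i,o)$: $\sum_{o'\in O:o'\succsim_i o,\,o'\ne o}p(i,o')\ge\sum_{j\in N:i\succ_o j}p(j,o)+p(\emptyset,o)$. Associated instance: $D=\{d_1,\dots,d_m\}$, $\Phi=\{\phi_1,\dots,\phi_n\}$, $N'=N\cup D$, $O'=O\cup\Phi$, with weak orders (blocks best to worst, consecutive blocks strict): $i\in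 N$: objects acceptable to $i$ by $\succsim_i$, $\phi_i$, $\phi_k$ ($k\ne i$) in increasing index, objects unacceptable to $i$ by $\succsim_i$; $o_j$: agents acceptable to $o_j$ by $\succsim_{o_j}$, $d_j$, $d_k$ ($k\ne j$) in increasing index, agents unacceptable to $o_j$ by $\succsim_{o_j}$; $d_j$: $o_j$, other objects of $O$ in increasing index, then null objects with $\phi_k\succsim'_{d_j}\phi_l$ iff $k\succsim_{o_j}l$; $\phi_i$: $i$, other agents of $N$ in increasing index, then dummies with $d_k\succsim'_{\phi_i}d_l$ iff $o_k\succsim_i o_l$. Associated random matching: $p'(i,o_j)=p(i,o_j)$, $p'(d_j,\phi_i)=p(i,o_j)$, $p'(i,\phi_i)=1-\sum_o p(i,o)$, $p'(d_j,o_j)=1-\sum_i p(i,o_j)$, other entries $0$ (an $(n+m)\times(n+m)$ bistochastic matrix). A bistochastic matrix $q$ on $N'\times O'$ is fractionally weakly stable if for every $(a,c)\in N'\times O'$: $\sum_{c':c'\succsim'_a c,\,c'\ne c}q(a,c')\ge\sum_{b:a\succ'_c b}q(b,c)$. *)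

(* Defs.v *)
From mathcomp Require Import all_boot all_order all_algebra.
Set Implicit Arguments. Unset Strict Implicit. Unset Printing Implicit Defensive.
Import Order.TTheory GRing.Theory Num.Theory.
Local Open Scope ring_scope.

(* Agents are 'I_n, objects are 'I_m; the null object/agent is None.   *)
(* apref i : rel (option 'I_m)   is  ≿_i  (x ≿_i y  iff apref i x y)    *)

Definition weak_order (T : Type) (r : rel T) : Prop :=
  (forall x y, r x y || r y x) /\ (forall x y z, r x y -> r y z -> r x z).

Definition sprefer (T : Type) (r : rel T) (x y : T) : bool := r x y && ~~ r y x.

Definition general_instance (n m : nat)
  (apref : 'I_n -> rel (option 'I_m)) (opref : 'I_m -> rel (option 'I_n)) : Prop :=
  (forall i, weak_order (apref i)) /\ (forall o, weak_order (opref o)) /\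
  (forall i o, sprefer (apref i) (Some o) None \/ sprefer (apref i) None (Some o)) /\
  (forall o i, sprefer (opref o) (Some i) None \/ sprefer (opref o) None (Some i)).

Section General.
Variables (R : realFieldType) (n m : nat).
Variables (apref : 'I_n -> rel (option 'I_m)) (opref : 'I_m -> rel (option 'I_n)).

Definition gen_random_matching (p : 'M[R]_(n, m)) : Prop :=
  (forall i o, 0 <= p i o) /\
  (forall i, \sum_(o < m) p i o <= 1) /\
  (forall o, \sum_(i < n) p i o <= 1).

Definition p_null (p : 'M[R]_(n, m)) (o : 'I_m) : R := 1 - \sum_(i < n) p i o.

Definition acceptable (i : 'I_n) (o : 'I_m) : bool :=
  sprefer (apref i) (Some o) None && sprefer (opref o) (Some i) None.

Definition individually_rational (p : 'M[R]_(n, m)) : Prop :=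
  forall i o, sprefer (apref i) None (Some o) || sprefer (opref o) None (Some i) ->
    p i o = 0.

Definition non_wasteful (p : 'M[R]_(n, m)) : Prop :=
  ~ exists i o, [/\ acceptable i o,
      \sum_(o' < m | apref i (Some o') (Some o)) p i o' < 1 &
      \sum_(j < n) p j o < 1].

Definition fract_weakly_stable (p : 'M[R]_(n, m)) : Prop :=
  [/\ individually_rational p, non_wasteful p &
    forall i o, acceptable i o ->
      \sum_(o' < m | apref i (Some o') (Some o) && (o' != o)) p i o'
        >= \sum_(j < n | sprefer (opref o) (Some i) (Some j)) p j o + p_null p o].

(* N' = N ∪ D  is  'I_n + 'I_m  (inl i = agent i, inr j = dummy d_j);  *)
(* O' = O ∪ Φ  is  'I_m + 'I_n  (inl j = object o_j, inr i = φ_i).     *)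

Definition agentN' := ('I_n + 'I_m)%type.
Definition objectO' := ('I_m + 'I_n)%type.

(* order given by blocks (lower block = better, consecutive blocks strict)
   and a within-block weak order *)
Definition block_le (X : Type) (bk : X -> nat) (within : rel X) : rel X :=
  fun x y => (bk x < bk y)%N || ((bk x == bk y) && within x y).

Definition agent_block (a : agentN') (c : objectO') : nat :=
  match a, c with
  | inl i, inl o => if sprefer (apref i) (Some o) None then 0%N else 3%N
  | inl i, inr k => if k == i then 1%N else 2%N
  | inr j, inl o => if o == j then 0%N else 1%N
  | inr j, inr k => 2%N
  end.

Definition agent_within (a : agentN') : rel objectO' :=
  fun c c' =>
  match a, c, c' with
  | inl i, inl o, inl o' => apref i (Some o) (Some o')
  | inl i, inr k, inr k' => (k <= k')%N
  | inr j, inl o, inl o' => (o <= o')%N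
  | inr j, inr k, inr k' => opref j (Some k) (Some k')
  | _, _, _ => true  (* never used: different kinds lie in different blocks *)
  end.

Definition agent_pref' (a : agentN') : rel objectO' :=
  block_le (agent_block a) (agent_within a).

Definition object_block (c : objectO') (a : agentN') : nat :=
  match c, a with
  | inl j, inl i => if sprefer (opref j) (Some i) None then 0%N else 3%N
  | inl j, inr k => if k == j then 1%N else 2%N
  | inr i, inl k => if k == i then 0%N else 1%N
  | inr i, inr k => 2%N
  end.

Definition object_within (c : objectO') : rel agentN' :=
  fun a a' =>
  match c, a, a' with
  | inl j, inl i, inl i' => opref j (Some i) (Some i')
  | inl j, inr k, inr k' => (k <= k')%N
  | inr i, inl k, inl k' => (k <= k')%N
  | inr i, inr k, inr k' => apref i (Some k) (Some k')
  | _, _, _ => true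
  end.

Definition object_pref' (c : objectO') : rel agentN' :=
  block_le (object_block c) (object_within c).

Definition assoc_matching (p : 'M[R]_(n, m)) (a : agentN') (c : objectO') : R :=
  match a, c with
  | inl i, inl j => p i j
  | inr j, inr i => p i j
  | inl i, inr k => if k == i then 1 - \sum_(o < m) p i o else 0
  | inr j, inl k => if k == j then 1 - \sum_(i < n) p i j else 0
  end.

Definition bistochastic (q : agentN' -> objectO' -> R) : Prop :=
  (forall a c, 0 <= q a c) /\
  (forall a, \sum_(c : objectO') q a c = 1) /\
  (forall c, \sum_(a : agentN') q a c = 1).

Definition fws_assoc (q : agentN' -> objectO' -> R) : Prop :=
  bistochastic q /\
  forall (a : agentN') (c : objectO'),
    \sum_(c' : objectO' | agent_pref' a c' c && (c' != c)) q a c'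
      >= \sum_(b : agentN' | sprefer (object_pref' c) a b) q b c.

End General.

(* Main.v *)
Require Import Defs.
From mathcomp Require Import all_boot all_order all_algebra.
From mathcomp Require Import lra.
Import Order.TTheory GRing.Theory Num.Theory.
Local Open Scope ring_scope.
Set Implicit Arguments. Unset Strict Implicit. Unset Printing Implicit Defensive.

Section Gen.
Variable R : realFieldType.

Lemma sum_sub (I : finType) (P Q : pred I) (F : I -> R) :
  (forall x, P x -> Q x) -> (forall x, Q x -> 0 <= F x) ->
  \sum_(x | P x) F x <= \sum_(x | Q x) F x.
Proof.
move=> PQ F0; rewrite [X in _ <= X](bigID P) /=.
have -> : \sum_(x | Q x && P x) F x = \sum_(x | P x) F x.
  by apply: eq_bigl => x; case: (boolP (P x)) => Px; rewrite ?andbT ?andbF ?PQ.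
rewrite lerDl; apply: sumr_ge0 => x /andP[] *; exact: F0.
Qed.

Lemma sum_ge_term (I : finType) (P : pred I) (F : I -> R) j :
  P j -> (forall x, P x -> 0 <= F x) -> F j <= \sum_(x | P x) F x.
Proof.
move=> Pj F0; rewrite (bigD1 j) //= lerDl; apply: sumr_ge0 => x /andP[] *; exact: F0.
Qed.

Lemma sum_le0_term (I : finType) (P : pred I) (F : I -> R) j :
  P j -> (forall x, P x -> 0 <= F x) -> \sum_(x | P x) F x <= 0 -> F j = 0.
Proof.
move=> Pj F0 H; have := sum_ge_term Pj F0; have := F0 _ Pj; lra.
Qed.

Lemma sum_if_eq (I : finType) (j : I) (x : R) :
  \sum_(k : I) (if k == j then x else 0) = x.
Proof. by rewrite -big_mkcond big_pred1_eq. Qed.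

End Gen.

Section Pref.
Variables (T : Type) (r : rel T).
Hypothesis wo : weak_order r.

Lemma wo_refl x : r x x.
Proof. by case: wo => t _; have := t x x; rewrite orbb. Qed.
Lemma wo_tot x y : ~~ r x y -> r y x.
Proof. by case: wo => t _; have := t x y; case: (r x y). Qed.
Lemma wo_trans x y z : r x y -> r y z -> r x z.
Proof. by case: wo => _ t; apply: t. Qed.
Lemma sp_le_trans x y z : sprefer r x y -> r y z -> sprefer r x z.
Proof.
rewrite /sprefer => /andP[xy nyx] yz; rewrite (wo_trans xy yz) /=.
by apply/negP => zx; move/negP: nyx; apply; apply: wo_trans yz zx.
Qed.
Lemma le_sp_trans x y z : r x y -> sprefer r y z -> sprefer r x z.
Proof.
rewrite /sprefer => xy /andP[yz nzy]; rewrite (wo_trans xy yz) /=.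
by apply/negP => zx; move/negP: nzy; apply; apply: wo_trans zx xy.
Qed.
Lemma sp_trans x y z : sprefer r x y -> sprefer r y z -> sprefer r x z.
Proof. by move=> xy /andP[yz _]; apply: sp_le_trans xy yz. Qed.
Lemma sp_asym x y : sprefer r x y -> ~~ sprefer r y x.
Proof. by rewrite /sprefer => /andP[-> _]; rewrite andbF. Qed.
Lemma sp_irr x : ~~ sprefer r x x.
Proof. by rewrite /sprefer andbN. Qed.
Lemma nle_sp x y : ~~ r x y -> sprefer r y x.
Proof. by move=> h; rewrite /sprefer h wo_tot. Qed.
End Pref.

Section Main.
Variables (R : realFieldType) (n m : nat).
Variables (apref : 'I_n -> rel (option 'I_m)) (opref : 'I_m -> rel (option 'I_n)).
Variable p : 'M[R]_(n, m).
Hypothesis hGI : general_instance apref opref.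
Hypothesis hRM : gen_random_matching p.

Notation q := (assoc_matching p).
Notation ai i o := (sprefer (apref i) (Some o) None).
Notation oi o i := (sprefer (opref o) (Some i) None).

Lemma awo i : weak_order (apref i). Proof. by case: hGI. Qed.
Lemma owo o : weak_order (opref o). Proof. by case: hGI => _ []. Qed.
Lemma nai i o : ~~ ai i o -> sprefer (apref i) None (Some o).
Proof. by case: hGI => _ [_ [h _]]; case: (h i o) => ->. Qed.
Lemma noi o i : ~~ oi o i -> sprefer (opref o) None (Some i).
Proof. by case: hGI => _ [_ [_ h]]; case: (h o i) => ->. Qed.
Lemma p0 i o : 0 <= p i o. Proof. by case: hRM. Qed.
Lemma rowle i : \sum_(o < m) p i o <= 1. Proof. by case: hRM => _ []. Qed.
Lemma colle o : \sum_(i < n) p i o <= 1. Proof. by case: hRM => _ []. Qed.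

Lemma q0 a c : 0 <= q a c.
Proof.
case: a c => [i|j] [k|k] /=; rewrite ?p0 //; case: ifP => _ //;
  by rewrite subr_ge0 ?rowle ?colle.

Qed.

Definition LHSa a c := \sum_(c' | agent_pref' apref opref a c' c && (c' != c)) q a c'.
Definition RHSa a c := \sum_(b | sprefer (object_pref' apref opref c) a b) q b c.

Lemma fws_unfold : fws_assoc apref opref q <-> bistochastic q /\ forall a c, RHSa a c <= LHSa a c.
Proof. by []. Qed.

Lemma sieF (I : finType) (j : I) (F : I -> R) :
  \sum_(k : I) (if k == j then F k else 0) = F j.
Proof. by rewrite -big_mkcond big_pred1_eq. Qed.
Lemma sieF' (I : finType) (j : I) (F : I -> R) :
  \sum_(k : I) (if j == k then F k else 0) = F j.
Proof.
rewrite -(sieF j F); apply: eq_bigr => k _; by rewrite eq_sym.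
Qed.
Lemma sumT (I1 I2 : finType) (P : pred (I1 + I2)) (F : I1 + I2 -> R) :
  \sum_(x | P x) F x = \sum_(x | P (inl x)) F (inl x) + \sum_(x | P (inr x)) F (inr x).
Proof. exact: big_sumType. Qed.
Ltac sT := rewrite sumT /=.
Lemma bist : bistochastic q.
Proof.
split; first exact: q0.
split.
- case=> [i|j]; sT.
  + rewrite (sieF i (fun _ => 1 - \sum_(o < m) p i o)); lra.
  + rewrite (sieF j (fun _ => 1 - \sum_(i < n) p i j)); lra.
- case=> [j|i]; sT.
  + rewrite (sieF' j (fun x => 1 - \sum_(i < n) p i x)); lra.
  + rewrite (sieF' i (fun x => 1 - \sum_(o < m) p x o)); lra.
Qed.
Lemma inl_eq (A B : eqType) (x y : A) : (inl x == inl y :> A + B) = (x == y).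
Proof. by apply/eqP/eqP => [[]|->]. Qed.
Lemma inr_eq (A B : eqType) (x y : B) : (inr x == inr y :> A + B) = (x == y).
Proof. by apply/eqP/eqP => [[]|->]. Qed.
Lemma inlr_eq (A B : eqType) (x : A) (y : B) : (inl x == inr y :> A + B) = false.
Proof. by []. Qed.
Lemma inrl_eq (A B : eqType) (x : B) (y : A) : (inr x == inl y :> A + B) = false.
Proof. by []. Qed.

Lemma A1L i o : ai i o -> LHSa (inl i) (inl o) = \sum_(o' | apref i (Some o') (Some o) && (o' != o)) p i o'.
Proof.
move=> hio; rewrite /LHSa sumT /= /agent_pref' /block_le /= hio.
rewrite [X in _ + X]big_pred0 ?addr0; last by move=> x; case: (x == i).
apply: eq_bigl => x; rewrite inl_eq; case h: (ai i x) => //=.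
case h2: (apref i (Some x) (Some o)) => //.
by move: (le_sp_trans (awo i) h2 hio); rewrite h.
Qed.
Lemma A1R i o : ai i o -> oi o i -> RHSa (inl i) (inl o) = \sum_(j | sprefer (opref o) (Some i) (Some j)) p j o + p_null p o.
Proof.
move=> hio hoi; rewrite /RHSa sumT /=.
have -> : \sum_(x < m | sprefer (object_pref' apref opref (inl o)) (inl i) (inr x)) q (inr x) (inl o) = p_null p o.
  rewrite (eq_bigl (fun _ => true)); last by move=> x; rewrite /object_pref' /sprefer /block_le /= hoi; case: (x == o).
  exact: (sieF' o (fun x => 1 - \sum_(i0 < n) p i0 x)).
apply: (congr1 (fun s => s + p_null p o)).
apply: eq_bigl => x; rewrite /object_pref' /sprefer /block_le /= hoi.
case h: (oi o x) => //=.
by have := sp_trans (owo o) hoi (noi (negbT h)); rewrite /sprefer => /andP[-> ->].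
Qed.

Lemma rowsplit i : \sum_(o < m) p i o = \sum_(o | ai i o) p i o + \sum_(o | ~~ ai i o) p i o.
Proof. exact: bigID. Qed.

Lemma L_ii i : LHSa (inl i) (inr i) = \sum_(o | ai i o) p i o.
Proof.
rewrite /LHSa sumT /=.
rewrite [X in _ + X]big_pred0 ?addr0; last first.
  move=> k; rewrite /agent_pref' /block_le /= inr_eq.
  by case: (k == i); rewrite ?eqxx ?andbF.
rewrite (eq_bigl (fun x => ai i x)) // => x; rewrite /agent_pref' /block_le /=.
by rewrite eqxx; case: (ai i x).
Qed.

Lemma R_ii i : \sum_(o < m) p i o <= RHSa (inl i) (inr i).
Proof.
rewrite /RHSa sumT /=.
rewrite [X in _ + X](eq_bigl (fun _ => true)); last first.
  by move=> k; rewrite /object_pref' /sprefer /block_le /= eqxx.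
rewrite lerDr; apply: sumr_ge0 => k _; exact: (q0 (inl k) (inr i)).
Qed.

Lemma L_oo o : LHSa (inr o) (inl o) = 0.
Proof.
rewrite /LHSa sumT /= big_pred0; last first.
  move=> x; rewrite /agent_pref' /block_le /= inl_eq.
  by case: eqP => [->|_]; rewrite ?eqxx ?andbF.
by rewrite add0r big_pred0 // => k; rewrite /agent_pref' /block_le /= eqxx.
Qed.

Lemma R_oo o i : ~~ oi o i -> p i o <= RHSa (inr o) (inl o).
Proof.
move=> h; rewrite /RHSa sumT /=.
apply: ler_wpDr; first by apply: sumr_ge0 => k _; exact: (q0 (inr k) (inl o)).
apply: (sum_ge_term (P := fun x => sprefer (object_pref' apref opref (inl o)) (inr o) (inl x)) (F := fun x => p x o)).
  by rewrite /object_pref' /sprefer /block_le /= (negbTE h) eqxx.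
by move=> *; exact: p0.
Qed.

Lemma IR_from (H : forall a c, RHSa a c <= LHSa a c) : individually_rational apref opref p.
Proof.
move=> i o /orP[h|h].
- have := H (inl i) (inr i); rewrite L_ii => h2.
  have h3 := R_ii i; rewrite rowsplit in h3.
  apply: (sum_le0_term (P := fun x => ~~ ai i x) (F := fun x => p i x)).
  + exact: sp_asym h.
  + by move=> *; exact: p0.
  + lra.
- have := H (inr o) (inl o); rewrite L_oo => h2.
  have h3 := R_oo (sp_asym h).
  have := p0 i o; lra.
Qed.

Lemma bigD1R (I : finType) (j : I) (P : pred I) (F : I -> R) :
  P j -> \sum_(i | P i) F i = F j + \sum_(i | P i && (i != j)) F i.
Proof. exact: bigD1. Qed.

Lemma part (I : finType) (r : rel (option I)) (F : I -> R) y :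
  weak_order r ->
  \sum_x F x = \sum_(x | r (Some x) (Some y) && (x != y)) F x + F y
               + \sum_(x | sprefer r (Some y) (Some x)) F x.
Proof.
move=> wo; rewrite (bigID (fun x => r (Some x) (Some y))) /=.
rewrite (bigD1R (j := y)); last exact: (wo_refl wo).
rewrite [X in _ = _ + X](eq_bigl (fun x => ~~ r (Some x) (Some y))); first by rewrite [F y + _]addrC.
move=> x; rewrite /sprefer; case h: (r (Some x) (Some y)); first by rewrite andbF.
by rewrite (wo_tot wo) // h.
Qed.

Lemma LHS_ge1 a c : (forall c', ~~ (agent_pref' apref opref a c' c && (c' != c)) -> q a c' = 0) ->
  LHSa a c = 1.
Proof.
move=> H; have [_ [hr _]] := bist; rewrite -(hr a) (bigID (fun c' => agent_pref' apref opref a c' c && (c' != c))) /=.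
by rewrite [X in _ = _ + X]big1 ?addr0.
Qed.

Lemma RHS_le1 a c : RHSa a c <= 1.
Proof.
have [_ [_ hc]] := bist; rewrite -(hc c) /RHSa.
rewrite [X in _ <= X](eq_bigl (fun _ => true)) //.
apply: sum_sub => // x _; exact: q0.
Qed.

Lemma RHS_zero a c : (forall b, sprefer (object_pref' apref opref c) a b -> q b c = 0) -> RHSa a c = 0.
Proof. by move=> H; rewrite /RHSa big1. Qed.

Lemma LHS_ge0 a c : 0 <= LHSa a c.
Proof. apply: sumr_ge0 => *; exact: q0. Qed.

Section Forward.
Hypothesis IRh : individually_rational apref opref p.
Lemma IRa i o : sprefer (apref i) None (Some o) -> p i o = 0.
Proof. by move=> h; apply: IRh; rewrite h. Qed.
Lemma IRo i o : sprefer (opref o) None (Some i) -> p i o = 0.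
Proof. by move=> h; apply: IRh; rewrite h orbT. Qed.
Lemma IRa' i o : ~~ ai i o -> p i o = 0.
Proof. by move/nai; exact: IRa. Qed.
Lemma IRo' i o : ~~ oi o i -> p i o = 0.
Proof. by move/noi; exact: IRo. Qed.

Lemma caseA2 i o : ~~ ai i o -> RHSa (inl i) (inl o) <= LHSa (inl i) (inl o).
Proof.
move=> h; rewrite LHS_ge1 ?RHS_le1 // => -[o'|k].
- rewrite /agent_pref' /block_le /= inl_eq (negbTE h) => hf.
  case h2: (ai i o') => //; last by apply: IRa'; rewrite h2.
  move: hf; rewrite h2 /=; case: eqP => // eo; by move: h; rewrite -eo h2.
- rewrite /agent_pref' /block_le /= (negbTE h) /=.
  by case: (k == i).
Qed.

Lemma caseA3 i o : ai i o -> ~~ oi o i -> RHSa (inl i) (inl o) <= LHSa (inl i) (inl o).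
Proof.
move=> h1 h2; rewrite RHS_zero ?LHS_ge0 // => -[j|k].
- rewrite /object_pref' /sprefer /block_le /= (negbTE h2) /=.
  case h3: (oi o j) => //= _; apply: IRo'; by rewrite h3.
- by rewrite /object_pref' /sprefer /block_le /= (negbTE h2); case: (k == o).
Qed.

Lemma caseB1 i : RHSa (inl i) (inr i) <= LHSa (inl i) (inr i).
Proof.
rewrite L_ii.
have -> : \sum_(o | ai i o) p i o = \sum_o p i o.
  rewrite (rowsplit i) [X in _ = _ + X]big1 ?addr0 // => o h; exact: IRa'.
rewrite /RHSa sumT /= [X in X + _]big1; last first.
  move=> j; rewrite /object_pref' /sprefer /block_le /=.
  case: (eqVneq j i) => [->|hne]; first by rewrite eqxx leqnn.
  by [].
set X := (X in _ + X); have : X <= \sum_o p i o by apply: sum_sub => // *; exact: p0.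
lra.
Qed.

Lemma caseB2 i k : k != i -> RHSa (inl i) (inr k) <= LHSa (inl i) (inr k).
Proof.
move=> hk; rewrite LHS_ge1 ?RHS_le1 // => -[o'|k'].
- rewrite /agent_pref' /block_le /= (negbTE hk) => hf.
  case h2: (ai i o'); last by apply: IRa'; rewrite h2.
  by move: hf; rewrite h2.
- rewrite /agent_pref' /block_le /= (negbTE hk) inr_eq.
  case: eqP => [->|] //=; by rewrite eq_sym hk.
Qed.

Lemma caseC j o : RHSa (inr j) (inl o) <= LHSa (inr j) (inl o).
Proof.
rewrite RHS_zero ?LHS_ge0 // => -[i'|k].
- rewrite /object_pref' /sprefer /block_le /=.
  case h3: (oi o i') => /=; first by case: (j == o).
  move=> _; apply: IRo'; by rewrite h3.
- rewrite /object_pref' /sprefer /block_le /=.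
  case: (eqVneq o k) => [<-|] //.
  case: (eqVneq j o) => [->|] //=; by rewrite leqnn.
Qed.

Lemma D_L j i : LHSa (inr j) (inr i) = p_null p j + \sum_(k | opref j (Some k) (Some i) && (k != i)) p k j.
Proof.
rewrite /LHSa sumT /=.
rewrite (bigD1R (j := j)); last by rewrite /agent_pref' /block_le /= eqxx.
rewrite [X in _ + X + _]big1; last by move=> x /andP[_ /negbTE ->].
rewrite eqxx addr0 /p_null.
set A := (X in _ + X); set B := (X in _ = _ + X).
suff -> : A = B by [].
rewrite /A /B; apply: eq_bigl => k.
by rewrite /agent_pref' /block_le /= inr_eq ?ltnn ?eqxx.
Qed.

Lemma D_R j i : RHSa (inr j) (inr i) = \sum_(k | sprefer (apref i) (Some j) (Some k)) p i k.
Proof.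
rewrite /RHSa sumT /= big_pred0; last first.
  by move=> x; rewrite /object_pref' /sprefer /block_le /=; case: (x == i).
set B := (X in 0 + X); suff -> : B = \sum_(k | sprefer (apref i) (Some j) (Some k)) p i k.
  lra.
rewrite /B; apply: eq_bigl => k.
by rewrite /object_pref' /sprefer /block_le /= ?ltnn ?eqxx.
Qed.

Hypothesis stab : forall i o, acceptable apref opref i o ->
  \sum_(j | sprefer (opref o) (Some i) (Some j)) p j o + p_null p o <=
  \sum_(o' | apref i (Some o') (Some o) && (o' != o)) p i o'.

Lemma caseD j i : RHSa (inr j) (inr i) <= LHSa (inr j) (inr i).
Proof.
rewrite D_L D_R /p_null.
have hr := part (fun o' => p i o') j (awo i); rewrite /= in hr.
have hc := part (fun k => p k j) i (owo j); rewrite /= in hc.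
have r1 := rowle i; have c1 := colle j.
have x0 := p0 i j.
have S0 : 0 <= \sum_(x | apref i (Some x) (Some j) && (x != j)) p i x by apply: sumr_ge0 => *; exact: p0.
have U0 : 0 <= \sum_(x | opref j (Some x) (Some i) && (x != i)) p x j by apply: sumr_ge0 => *; exact: p0.
have W0 : 0 <= \sum_(x | sprefer (apref i) (Some j) (Some x)) p i x by apply: sumr_ge0 => *; exact: p0.
have T0 : 0 <= \sum_(x | sprefer (opref j) (Some i) (Some x)) p x j by apply: sumr_ge0 => *; exact: p0.
case: (boolP (oi j i)) => hoi; last first.
  have xz : p i j = 0 by exact: IRo'.
  have Tz : \sum_(x | sprefer (opref j) (Some i) (Some x)) p x j = 0.
    apply: big1 => k hk. exact: (IRo (sp_trans (owo j) (noi hoi) hk)).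
  lra.
case: (boolP (ai i j)) => hai; last first.
  have Wz : \sum_(x | sprefer (apref i) (Some j) (Some x)) p i x = 0.
    apply: big1 => k hk. exact: (IRa (sp_trans (awo i) (nai hai) hk)).
  lra.
have := stab (i := i) (o := j); rewrite /acceptable hai hoi /p_null => /(_ isT) st.
lra.
Qed.

Lemma fwd_all a c : RHSa a c <= LHSa a c.
Proof.
case: a c => [i|j] [o|k].
- case: (boolP (ai i o)) => hai; last exact: caseA2.
  case: (boolP (oi o i)) => hoi; last exact: caseA3.
  rewrite A1L // A1R //; apply: stab; by rewrite /acceptable hai hoi.
- case: (eqVneq k i) => [->|hk]; [exact: caseB1 | exact: caseB2].
- exact: caseC.
- exact: caseD.
Qed.
End Forward.

Lemma main_iff :
  fract_weakly_stable apref opref p <->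
  (fws_assoc apref opref (assoc_matching p) /\ non_wasteful apref opref p).
Proof.
split.
- case=> IR NW ST; split => //; split; first exact: bist.
  exact: fwd_all.
- case=> [[B H] NW]; split => //.
  + exact: IR_from.
  + move=> i o /andP[hai hoi]; have := H (inl i) (inl o).
    by rewrite -/(LHSa _ _) -/(RHSa _ _) A1L // A1R.
Qed.
End Main.

Theorem proposition29 (R : realFieldType) (n m : nat)
  (apref : 'I_n -> rel (option 'I_m)) (opref : 'I_m -> rel (option 'I_n))
  (p : 'M[R]_(n, m)) :
  (0 < n)%N -> (0 < m)%N ->
  general_instance apref opref ->
  gen_random_matching p ->
  fract_weakly_stable apref opref p <->
  (fws_assoc apref opref (assoc_matching p) /\ non_wasteful apref opref p).
Proof.
move=> _ _ hGI hRM; exact: main_iff.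
Qed.
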